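(* If $\eta$ is a probability measure, then $\int\varphi\,d\eta=\tau(\varphi)$ for each continuous function $\varphi:\mathbb{X}\to\mathbb{R}$.
   Context: $\mathbb{X}$ is a compact metric space. $(\xi_j)_{j\in\mathbb N}$ is a sequence of finitely additive outer probabilities on $\mathbb{X}$ (set functions on all subsets, values in $[0,1]$, finitely additive, $\xi_j(\mathbb{X})=1$). For $A\subset\mathbb{X}$, $\tau(A)=\limsup_{n\to\infty}\frac1n\sum_{j=0}^{n-1}\xi_j(A)$, and for a bounded measurable $\varphi$, $\tau(\varphi)=\limsup_{n\to\infty}\frac1n\sum_{j=0}^{n-1}\xi_j(\varphi)$ where $\xi_j(\varphi)=\int\varphi\,d\xi_j$. For $Y\subset\mathbb{X}$, $r>0$, $\nu_r(Y)=\inf\sum_{I\in\mathcal I}\tau(I)$ over countable covers $\mathcal I$ of $Y$ by open sets of diameter $\le r$; $\nu(Y)=\sup_{r>0}\nu_r(Y)$; $\eta$ is the restriction of $\nu$ to Borel sets. *)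

(* Defs.v *)
From HB Require Import structures.
From mathcomp Require Import all_boot all_order all_algebra.
From mathcomp Require Import all_classical all_reals all_analysis.
Set Implicit Arguments. Unset Strict Implicit. Unset Printing Implicit Defensive.
Import Order.TTheory GRing.Theory Num.Theory.
Import numFieldNormedType.Exports.
Local Open Scope classical_set_scope.
Local Open Scope ring_scope.

(* A (nonempty, i.e. pointed) metric space: needed because measurable types
   in MathComp-Analysis are pointed. *)
#[short(type="pmetricType")]
HB.structure Definition PMetric (R : numDomainType) :=
  { M of Metric R M & isPointed M }.

Section Defs.
Context {R : realType} {X : pmetricType R}.

Definition fa_outer_prob (xi : set X -> R) : Prop :=
  [/\ forall A, 0 <= xi A <= 1,
      forall A B, A `&` B = set0 -> xi (A `|` B) = xi A + xi B
    & xi setT = 1].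

Definition finite_partition (n : nat) (P : 'I_n -> set X) : Prop :=
  (forall i j, i != j -> P i `&` P j = set0) /\ (forall x, exists i, P i x).

Definition fa_integral (xi : set X -> R) (phi : X -> R) : R :=
  sup [set s | exists n (P : 'I_n -> set X), finite_partition P /\
         s = \sum_(i < n) inf [set phi x | x in P i] * xi (P i)].

Definition tau_set (xi : nat -> set X -> R) (A : set X) : \bar R :=
  limn_esup (fun n => (n%:R^-1 * \sum_(j < n) xi j A)%:E).

Definition tau_fun (xi : nat -> set X -> R) (phi : X -> R) : \bar R :=
  limn_esup (fun n => (n%:R^-1 * \sum_(j < n) fa_integral (xi j) phi)%:E).

Definition diam_le (A : set X) (r : R) : Prop :=
  forall x y, A x -> A y -> mdist x y <= r.

(* nu_r(Y): inf over countable covers (nat-indexed; finite covers are padded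
   with the empty set) by open sets of diameter <= r *)
Definition nu_r (xi : nat -> set X -> R) (r : R) (Y : set X) : \bar R :=
  ereal_inf [set (\sum_(0 <= k <oo) tau_set xi (I k))%E |
    I in [set I : nat -> set X |
           (forall k, open (I k) /\ diam_le (I k) r) /\ Y `<=` \bigcup_k I k]].

Definition nu (xi : nat -> set X -> R) (Y : set X) : \bar R :=
  ereal_sup [set nu_r xi r Y | r in [set r : R | 0 < r]].

End Defs.

Notation borel X := (g_sigma_algebraType (@open X)).

Definition eta_borel {R : realType} {X : pmetricType R} (xi : nat -> set X -> R)
  : set (borel X) -> \bar R := fun A => nu xi A.

(* Main.v *)
Require Import Defs.
From HB Require Import structures.
From mathcomp Require Import all_boot all_order all_algebra.
From mathcomp Require Import all_classical all_reals all_analysis.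
Import Order.TTheory GRing.Theory Num.Theory.
Import numFieldNormedType.Exports.
Local Open Scope classical_set_scope.
Local Open Scope ring_scope.
From mathcomp Require Import ring lra.
Section FA.
Context {R : realType} {X : pmetricType R} {xi : set X -> R}
  (hxi : fa_outer_prob xi).

Lemma fa0 : xi set0 = 0.
Proof.
case: hxi => _ hadd _.
have := hadd set0 set0 (setI0 _); rewrite setU0 => /eqP.
by rewrite -subr_eq0 opprD addrA subrr sub0r oppr_eq0 => /eqP.
Qed.

Lemma fa_ge0 A : 0 <= xi A.
Proof. by case: hxi => h _ _; case/andP: (h A). Qed.

Lemma fa_le1 A : xi A <= 1.
Proof. by case: hxi => h _ _; case/andP: (h A). Qed.

Lemma faT : xi setT = 1.
Proof. by case: hxi. Qed.

Lemma faU A B : A `&` B = set0 -> xi (A `|` B) = xi A + xi B.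
Proof. by case: hxi => _ h _; apply: h. Qed.

Lemma fa_split A B : xi A = xi (A `&` B) + xi (A `&` ~` B).
Proof.
rewrite -faU; last by rewrite setIACA setICr setI0.
by rewrite -setIUr setUCr setIT.
Qed.

Lemma fa_le A B : A `<=` B -> xi A <= xi B.
Proof.
move=> AB; rewrite (fa_split B A) setIidr //.
by rewrite lerDl fa_ge0.
Qed.

Lemma faC A : xi (~` A) = 1 - xi A.
Proof.
by rewrite -faT (fa_split setT A) !setTI [xi A + _]addrC addrK.
Qed.



Lemma fa_subU A B : xi (A `|` B) <= xi A + xi B.
Proof.
have -> : A `|` B = A `|` (B `&` ~` A).
  by rewrite setUIr setUCr setIT.
rewrite faU; last by rewrite setIA setIAC setICr set0I.
by rewrite lerD2l; apply: fa_le; apply: subIsetl.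
Qed.

Lemma fa_big (I : eqType) (s : seq I) (F : I -> set X) :
  uniq s -> (forall i j, i != j -> F i `&` F j = set0) ->
  xi (\big[setU/set0]_(i <- s) F i) = \sum_(i <- s) xi (F i).
Proof.
move=> us dF; elim: s us => [|a s IH] /=; first by rewrite !big_nil fa0.
move=> /andP[as_ us]; rewrite !big_cons faU ?IH //.
rewrite big_distrr /=; apply: big1_seq => i /andP[_ iS].
by apply: dF; apply: contraNneq as_ => ->.
Qed.

Lemma big_setU_mem (I : eqType) (s : seq I) (F : I -> set X) x :
  (\big[setU/set0]_(i <- s) F i) x <-> exists2 i, i \in s & F i x.
Proof.
elim: s => [|a s IH]; first by rewrite big_nil; split=> // -[].
rewrite big_cons; split.
  by case=> [Fa|/IH [i si Fi]]; [exists a; rewrite ?mem_head|exists i; rewrite // in_cons si orbT].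
case=> i; rewrite in_cons => /orP[/eqP ->|si Fi]; first by left.
by right; apply/IH; exists i.
Qed.

Lemma fa_partition n (P : 'I_n -> set X) B : finite_partition P ->
  \sum_(i < n) xi (P i `&` B) = xi B.
Proof.
case=> dP cP.
rewrite -(@fa_big _ (index_enum 'I_n) (fun i => P i `&` B)).
- congr xi; apply/seteqP; split=> x.
    by move=> /big_setU_mem [i _ []].
  move=> Bx; apply/big_setU_mem; have [i Pi] := cP x.
  by exists i; rewrite ?mem_index_enum.
- exact: index_enum_uniq.
- by move=> i j ij; rewrite setIACA dP // set0I.
Qed.
End FA.
Section FAI.
Context {R : realType} {X : pmetricType R} (xi : set X -> R)
  (hxi : fa_outer_prob xi) (phi : X -> R) (c d : R) (hd : 0 < d) (m : nat)
  (lvl : X -> nat) (hlvl : forall x, (lvl x < m)%N)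
  (hlo : forall x, c + (lvl x)%:R * d <= phi x)
  (hhi : forall x, phi x <= c + (lvl x).+1%:R * d).

Let Q (i : 'I_m) : set X := [set x | lvl x = i].

Let Qpart : finite_partition Q.
Proof.
split.
  move=> i j ij; apply/seteqP; split=> x //= [] /= h1 h2.
  have ji : i = j by apply: val_inj; rewrite /= -h1 -h2.
  by move: ij; rewrite ji eqxx.
by move=> x; exists (Ordinal (hlvl x)).
Qed.

Let phi_lb x : c <= phi x.
Proof.
apply: le_trans (hlo x); rewrite lerDl mulr_ge0 // ?ler0n //; exact: ltW.
Qed.

Let hlb (A : set X) : has_lbound [set phi x | x in A].
Proof. by exists c => _ [x _ <-]; apply: phi_lb. Qed.

Let key n (P : 'I_n -> set X) : finite_partition P ->
  \sum_(j < n) inf [set phi x | x in P j] * xi (P j) <=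
  \sum_(i < m) (c + i.+1%:R * d) * xi (Q i).
Proof.
move=> hP.
under eq_bigr do rewrite -(@fa_partition _ _ _ hxi _ _ (P _) Qpart) mulr_sumr.
under [X in _ <= X]eq_bigr do rewrite -(@fa_partition _ _ _ hxi _ _ (Q _) hP) mulr_sumr.
rewrite exchange_big /=; apply: ler_sum => i _; apply: ler_sum => j _.
have [[x [Qx Px]]|] := pselect ((Q i `&` P j) !=set0).
  rewrite setIC; apply: ler_wpM2r; first exact: fa_ge0.
  apply: le_trans (ge_inf (hlb (P j)) _) _; first by exists x.
  by apply: le_trans (hhi x) _; rewrite /Q /= in Qx; rewrite Qx lexx.
move=> h; have e : Q i `&` P j = set0.
  by apply/seteqP; split=> x // Hx; apply: h; exists x.
by rewrite e setIC e (fa0 hxi) !mulr0.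
Qed.

Let Hs k := [set x | (k <= lvl x)%N].

Let sumQ : \sum_(i < m) xi (Q i) = 1.
Proof.
rewrite -(faT hxi) -(@fa_partition _ _ _ hxi _ _ setT Qpart).
by apply: eq_bigr => i _; rewrite setIT.
Qed.

Let S_eq : \sum_(i < m) i%:R * xi (Q i) = \sum_(1 <= k < m) xi (Hs k).
Proof.
have e k : xi (Hs k) = \sum_(i < m) (if (k <= i)%N then xi (Q i) else 0).
  rewrite -(@fa_partition _ _ _ hxi _ _ (Hs k) Qpart); apply: eq_bigr => i _.
  case: ifPn => ki.
    congr xi; apply/seteqP; split=> x; first by case.
    by move=> Qx; split=> //; rewrite /Hs /= Qx.
  have -> : Q i `&` Hs k = set0; last exact: (fa0 hxi).
  apply/seteqP; split=> x // [] Qx; rewrite /Hs /= Qx => ik.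
  by move: ki; rewrite ik.
under [RHS]eq_bigr do rewrite e.
rewrite exchange_big /=; apply: eq_bigr => i _.
rewrite (@big_cat_nat _ _ _ i.+1) //=.
rewrite (eq_big_nat _ _ (F2 := fun _ => xi (Q i))); last first.
  by move=> k /andP[_]; rewrite ltnS => ->.
rewrite (eq_big_nat _ _ (F1 := fun k => if (k <= i)%N then xi (Q i) else 0) (F2 := fun _ => 0)); last first.
  by move=> k /andP[ik _]; rewrite leqNgt ik.
by rewrite [X in _ + X]big1 // addr0 sumr_const_nat subn1 /= mulr_natl.
Qed.

Lemma fa_integral_bounds :
  c + d * \sum_(1 <= k < m) xi [set x | (k <= lvl x)%N] <= fa_integral xi phi
  <= c + d + d * \sum_(1 <= k < m) xi [set x | (k <= lvl x)%N].
Proof.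
have E1 : \sum_(i < m) (c + i.+1%:R * d) * xi (Q i) =
    c + d + d * \sum_(1 <= k < m) xi [set x | (k <= lvl x)%N].
  rewrite -S_eq; transitivity (\sum_(i < m) (c * xi (Q i) + d * xi (Q i) + d * (i%:R * xi (Q i)))).
    by apply: eq_bigr => i _; rewrite -addn1 natrD; ring.
  by rewrite !big_split /= -!mulr_sumr sumQ !mulr1.
have E0 : \sum_(i < m) (c + i%:R * d) * xi (Q i) =
    c + d * \sum_(1 <= k < m) xi [set x | (k <= lvl x)%N].
  rewrite -S_eq; transitivity (\sum_(i < m) (c * xi (Q i) + d * (i%:R * xi (Q i)))).
    by apply: eq_bigr => i _; ring.
  by rewrite !big_split /= -!mulr_sumr sumQ !mulr1.
have ub : ubound [set s | exists n (P : 'I_n -> set X), finite_partition P /\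
         s = \sum_(i < n) inf [set phi x | x in P i] * xi (P i)]
   (\sum_(i < m) (c + i.+1%:R * d) * xi (Q i)).
  by move=> _ [n [P [hP ->]]]; apply: key.
apply/andP; split; last first.
  rewrite -E1; apply: ge_sup => //.
  by eexists; exists m, Q; split.
rewrite -E0; apply: le_trans (ub_le_sup (ex_intro _ _ ub) _); last first.
  by exists m, Q; split.
apply: ler_sum => i _.
have [[x Qx]|] := pselect (Q i !=set0).
  apply: ler_wpM2r; first exact: fa_ge0.
  apply: lb_le_inf; first by exists (phi x), x.
  by move=> _ [y Qy <-]; apply: le_trans (hlo y); rewrite Qy.
move=> h; have e : Q i = set0.
  by apply/seteqP; split=> y // Qy; apply: h; exists y.
by rewrite e (fa0 hxi) !mulr0.
Qed.

End FAI.
Section LEVEL.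
Context {R : realType} {T : Type} (phi : T -> R) (c d : R) (m : nat)
  (hd : (0 < d)%R) (hc : forall x, (c < phi x)%R)
  (hm : forall x, (phi x < c + m%:R * d)%R).

Let y x := ((phi x - c) / d)%R.

Let y_gt0 x : (0 < y x)%R.
Proof. by rewrite /y divr_gt0 // subr_gt0. Qed.

Let y_ltm x : (y x < m%:R)%R.
Proof. by rewrite /y ltr_pdivrMr // ltrBlDl. Qed.

Let yle x (k : R) : (k <= y x)%R = (c + k * d <= phi x)%R.
Proof. by rewrite /y ler_pdivlMr // -lerBrDl. Qed.

Let ylt x (k : R) : (k < y x)%R = (c + k * d < phi x)%R.
Proof. by rewrite /y ltr_pdivlMr // -ltrBrDl. Qed.

Let yge x (k : R) : (y x <= k)%R = (phi x <= c + k * d)%R.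
Proof. by rewrite /y ler_pdivrMr // lerBlDl. Qed.

Lemma level_closed : exists lvl : T -> nat,
  [/\ forall x, (lvl x < m)%N,
      forall x, (c + (lvl x)%:R * d <= phi x)%R,
      forall x, (phi x <= c + (lvl x).+1%:R * d)%R &
      forall x k, (k <= lvl x)%N <-> (c + k%:R * d <= phi x)%R].
Proof.
have [f hf] := @choice T nat (fun x k => (k%:R <= y x < k.+1%:R)%R)
   (fun x => ex_intro (fun k : nat => (k%:R <= y x < k.+1%:R)%R) _ (truncn_itv (ltW (y_gt0 x)))).
exists f; split => x.
- have /andP[h1 _] := hf x; rewrite -(ltr_nat R); exact: le_lt_trans h1 (y_ltm x).
- have /andP[h1 _] := hf x; by have <- := yle x (f x)%:R.
- have /andP[_ h2] := hf x; by have <- := yge x (f x).+1%:R; apply: ltW.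
- move=> k; have <- := yle x k%:R; have /andP[h1 h2] := hf x; split.
    by move=> kf; apply: le_trans h1; rewrite ler_nat.
  by move=> ky; have := le_lt_trans ky h2; rewrite ltr_nat ltnS.
Qed.

Lemma level_open : exists lvl : T -> nat,
  [/\ forall x, (lvl x < m)%N,
      forall x, (c + (lvl x)%:R * d <= phi x)%R,
      forall x, (phi x <= c + (lvl x).+1%:R * d)%R &
      forall x k, (k <= lvl x)%N <-> (c + k%:R * d < phi x)%R].
Proof.
have ex x : exists k : nat, (k%:R < y x <= k.+1%:R)%R.
  have /andP[h1 h2] := truncn_itv (ltW (y_gt0 x)).
  have [e|ne] := eqVneq ((Num.truncn (y x))%:R) (y x).
    exists (Num.truncn (y x)).-1.
    have t0 : (0 < Num.truncn (y x))%N by rewrite -(ltr_nat R) e y_gt0.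
    by rewrite prednK // e lexx andbT -[X in (_ < X)%R]e ltr_nat ltn_predL.
  exists (Num.truncn (y x)); by rewrite ltW // andbT lt_neqAle ne h1.
have [f hf] := @choice T nat (fun x k => (k%:R < y x <= k.+1%:R)%R) ex.
exists f; split => x.
- have /andP[h1 _] := hf x; rewrite -(ltr_nat R); exact: lt_trans h1 (y_ltm x).
- have /andP[h1 _] := hf x; by have <- := yle x (f x)%:R; apply: ltW.
- have /andP[_ h2] := hf x; by have <- := yge x (f x).+1%:R.
- move=> k; have <- := ylt x k%:R; have /andP[h1 h2] := hf x; split.
    by move=> kf; apply: le_lt_trans h1; rewrite ler_nat.
  by move=> ky; have := lt_le_trans ky h2; rewrite ltr_nat ltnS.
Qed.
End LEVEL.
Section INT.
Context {R : realType} {X : pmetricType R} (Pm : probability (borel X) R).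

Lemma meas_open (U : set X) : open U -> measurable (U : set (borel X)).
Proof. by move=> oU; apply: sub_sigma_algebra. Qed.

Lemma meas_closed (F : set X) : closed F -> measurable (F : set (borel X)).
Proof.
move=> cF; rewrite -(setCK F); apply: measurableC; apply: meas_open.
exact: closed_openC.
Qed.

Lemma phi_meas (phi : X -> R) : continuous phi ->
  measurable_fun [set: borel X] (phi : borel X -> R).
Proof.
move=> cphi; apply: (measurability _ (measurable_realfun.RGenOpens.measurableE R)).
move=> _ [_ [a [b ->]] <-]; rewrite setTI; apply: meas_open.
by move/continuousP: cphi; apply; apply: interval_open.
Qed.

Lemma int_simple (c d : R) (H : nat -> set X) (s : seq nat) :
  (forall k, measurable (H k : set (borel X))) ->
  (\int[Pm]_x (c%:E + \sum_(k <- s) (d * \1_(H k) x)%:E) =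
  (c + d * \sum_(k <- s) fine (Pm (H k)))%:E)%E.
Proof.
move=> mH.
have iH k : Pm.-integrable [set: borel X] (fun x => (d * \1_(H k) x)%:E).
  under eq_fun do rewrite EFinM.
  exact: integrableZl (integrable_indic _ (mH k)).
rewrite integralD //; last exact: integrable_sum.
  2: exact: (finite_measure_integrable_cst _ c measurableT).
rewrite integral_sum //.
rewrite (integral_cst Pm measurableT c%:E).
rewrite -[X in (c%:E * X)%E]/(Pm [set: borel X]) probability_setT mule1.
under eq_bigr => k _.
  rewrite (eq_integral (fun x : borel X => d%:E * (\1_(H k) x)%:E)%E); last by move=> x _; rewrite EFinM.
  rewrite integralZl //; last exact: integrable_indic.
  rewrite integral_indic // setIT.
  over.
rewrite EFinD mulr_sumr -sumEFin; congr (_ + _)%E.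
apply: eq_bigr => k _; rewrite EFinM fineK // ge0_fin_numE ?measure_ge0 //.
by apply: le_lt_trans (probability_le1 Pm (mH k)) _; rewrite ltry.
Qed.

End INT.
Local Open Scope ereal_scope.
Section LS.
Context {R : realType}.
Implicit Types (u : nat -> R) (l : R).

Lemma ls_le u l : (forall e : R, (0 < e)%R -> exists N, forall n, (N <= n)%N -> (u n <= l + e)%R) ->
  limn_esup (fun n => (u n)%:E) <= l%:E.
Proof.
move=> h; apply/lee_addgt0Pr => e e0; have [N hN] := h e e0.
rewrite /limn_esup limf_esupE; apply: le_trans (ereal_inf_lbound _) _.
  by exists [set n | (N <= n)%N]; [exists N|reflexivity].
apply: ge_ereal_sup => _ [n /= Nn <-]; rewrite -EFinD lee_fin; exact: hN.
Qed.

Lemma ls_lt u (l : \bar R) : limn_esup (fun n => (u n)%:E) < l ->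
  exists N, forall n, (N <= n)%N -> (u n)%:E < l.
Proof.
rewrite /limn_esup limf_esupE => /ereal_inf_lt [_ [V [N _ NV] <-]] hl.
exists N => n Nn; apply: le_lt_trans hl; apply: ereal_sup_ubound.
by exists n => //; apply: NV.
Qed.

Lemma ls_ge0 u : (forall n, (0 <= u n)%R) -> 0 <= limn_esup (fun n => (u n)%:E).
Proof.
move=> h; apply: limf_esup_ge0 => [|n]; last by rewrite lee_fin.
by case=> N _ /(_ N (leqnn N)).
Qed.
End LS.
Section TAU.
Context {R : realType} {X : pmetricType R} (xi : nat -> set X -> R)
  (hxi : forall j, fa_outer_prob (xi j)).

Definition avg (A : set X) (n : nat) : R := (n%:R^-1 * \sum_(j < n) xi j A)%R.

Lemma tauE A : tau_set xi A = limn_esup (fun n => (avg A n)%:E).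
Proof. by []. Qed.

Lemma avg_ge0 A n : (0 <= avg A n)%R.
Proof.
rewrite /avg mulr_ge0 // ?invr_ge0 ?ler0n // sumr_ge0 // => j _.
exact: (fa_ge0 (hxi j) A).
Qed.

Lemma avg_le A B n : A `<=` B -> (avg A n <= avg B n)%R.
Proof.
move=> AB; rewrite /avg ler_wpM2l // ?invr_ge0 ?ler0n //.
by apply: ler_sum => j _; apply: fa_le (hxi j) _ _ AB.
Qed.

Lemma avg_le1 A n : (avg A n <= 1)%R.
Proof.
case: n => [|n]; first by rewrite /avg invr0 mul0r ler01.
apply: (le_trans (avg_le _ _ n.+1 (@subsetT _ A))).
rewrite /avg; under eq_bigr do rewrite (faT (hxi _)).
by rewrite sumr_const card_ord mulVf // pnatr_eq0.
Qed.

Lemma avgU A B n : (avg (A `|` B) n <= avg A n + avg B n)%R.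
Proof.
rewrite /avg -mulrDr ler_wpM2l // ?invr_ge0 ?ler0n // -big_split /=.
by apply: ler_sum => j _; exact: (fa_subU (hxi j) A B).
Qed.

Lemma avgC A n : (0 < n)%N -> avg (~` A) n = (1 - avg A n)%R.
Proof.
move=> n0; rewrite /avg; under eq_bigr do rewrite (faC (hxi _)).
rewrite sumrB sumr_const card_ord mulrBr mulVf //.
by rewrite pnatr_eq0 -lt0n.
Qed.

Lemma tau_ge0 A : 0 <= tau_set xi A.
Proof. by apply: ls_ge0 => n; apply: avg_ge0. Qed.

Lemma tau_le1 A : tau_set xi A <= 1.
Proof.
apply: ls_le => e e0; exists 0%N => n _.
by apply: le_trans (avg_le1 A n) _; rewrite lerDl ltW.
Qed.

Lemma tau_fin A : tau_set xi A = (fine (tau_set xi A))%:E.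
Proof.
have h0 := tau_ge0 A; have h1 := tau_le1 A.
by rewrite fineK // ge0_fin_numE // (le_lt_trans h1) // ltry.
Qed.

Lemma tau_le_gen A (Bs : seq (set X)) :
  (forall n, (avg A n <= \sum_(B <- Bs) avg B n)%R) ->
  tau_set xi A <= \sum_(B <- Bs) tau_set xi B.
Proof.
move=> h.
have -> : \sum_(B <- Bs) tau_set xi B = (\sum_(B <- Bs) fine (tau_set xi B))%:E.
  rewrite -sumEFin; apply: eq_bigr => B _; exact: tau_fin.
apply: ls_le => e e0.
pose e' := (e / (size Bs).+1%:R)%R.
have e'0 : (0 < e')%R by rewrite divr_gt0 // ltr0n.
have gen : forall Cs : seq (set X), exists N, forall n, (N <= n)%N ->
    (\sum_(B <- Cs) avg B n <= \sum_(B <- Cs) (fine (tau_set xi B) + e'))%R.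
  elim=> [|B Bs' [N hN]]; first by exists 0%N => n _; rewrite !big_nil.
  have : tau_set xi B < (fine (tau_set xi B) + e')%:E.
    by rewrite {1}tau_fin lte_fin ltrDl.
  move=> /ls_lt [M hM]; exists (maxn N M) => n; rewrite geq_max => /andP[Nn Mn].
  rewrite !big_cons lerD //; last exact: hN.
  by have := hM n Mn; rewrite lte_fin => /ltW.
have [N hN] := gen Bs.
  exists N => n Nn; apply: le_trans (h n) _; apply: le_trans (hN n Nn) _.
  rewrite big_split /= lerD2l.
  have -> : (\sum_(B <- Bs) e' = e' *+ size Bs)%R.
    by elim: (Bs) => [|b bs IH]; rewrite ?big_nil ?big_cons ?IH ?mulrS.
  rewrite /e' -mulr_natr mulrAC ler_pdivrMr ?ltr0n //.
  rewrite ler_wpM2l ?ltW //.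
  by rewrite ltr_nat.
Qed.

End TAU.
Section TAUC.
Context {R : realType} {X : pmetricType R} (xi : nat -> set X -> R)
  (hxi : forall j, fa_outer_prob (xi j)).

Lemma avg0 n : avg xi set0 n = 0%R.
Proof.
by rewrite /avg big1 ?mulr0 // => j _; rewrite (fa0 (hxi j)).
Qed.

Lemma avg_big (Bs : seq (set X)) n :
  (avg xi (\big[setU/set0]_(B <- Bs) B) n <= \sum_(B <- Bs) avg xi B n)%R.
Proof.
elim: Bs => [|B Bs IH]; first by rewrite !big_nil avg0.
rewrite !big_cons; apply: le_trans (avgU xi hxi _ _ _) _.
by rewrite lerD2l.
Qed.

Lemma nat_bound (s : seq nat) : exists N, forall i, i \in s -> (i < N)%N.
Proof.
elim: s => [|a s [N hN]]; first by exists 0%N.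
exists (maxn N a.+1) => i; rewrite in_cons => /orP[/eqP ->|/hN iN].
  by rewrite leq_max leqnn orbT.
by rewrite leq_max iN.
Qed.

Lemma tau_closed_le_nu (F : set X) : compact [set: X] -> closed F ->
  tau_set xi F <= nu xi F.
Proof.
move=> cT cF.
have cFc : compact F by apply: subclosed_compact cF cT _.
apply: le_trans (ereal_sup_ubound _); last by exists 1%R => //=.
apply: le_ereal_inf_tmp => _ [I [hI FI] <-].
move: cFc; rewrite compact_cover => /(_ nat setT I) [].
  by move=> i _; case: (hI i).
  by move=> x /FI [i _ Ii]; exists i.
move=> D' _ FD'.
have [N hN] := nat_bound (finmap.enum_fset D').
pose Bs := map I (iota 0 N).
have FB : F `<=` \big[setU/set0]_(B <- Bs) B.
  move=> x /FD' [i /= iD Ii]; apply/(big_setU_mem _ Bs id x); exists (I i) => //.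
  by apply: map_f; rewrite mem_iota /= add0n; apply: hN.
apply: le_trans (_ : \sum_(B <- Bs) tau_set xi B <= _).
  apply: tau_le_gen => // n; apply: le_trans (avg_big _ n).
  exact: avg_le xi hxi _ _ _ FB.
rewrite big_map.
have -> : iota 0 N = index_iota 0 N by rewrite /index_iota subn0.
apply: (@nneseries_lim_ge _ (fun k => tau_set xi (I k)) xpredT 0 N).
by move=> n _ _; apply: tau_ge0.
Qed.
End TAUC.
Lemma ls_ge {R : realType} (u : nat -> R) (l : R) :
  (forall e : R, (0 < e)%R -> exists N, forall n, (N <= n)%N -> (l - e <= u n)%R) ->
  l%:E <= limn_esup (fun n => (u n)%:E).
Proof.
move=> h; apply/lee_addgt0Pr => e e0.
rewrite leNgt; apply/negP => H.
have : limn_esup (fun n => (u n)%:E) < (l - e)%:E by rewrite EFinB lteBrDr.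
move=> /ls_lt [N1 h1]; have [N2 h2] := h e e0.
have := h1 (maxn N1 N2) (leq_maxl _ _); have := h2 (maxn N1 N2) (leq_maxr _ _).
by rewrite lte_fin => a b; move: (le_lt_trans a b); rewrite ltxx.
Qed.

Lemma sum_count {R : realType} (a : R) l m : (l < m)%N ->
  (\sum_(1 <= k < m) (if (k <= l)%N then a else 0) = a *+ l)%R.
Proof.
move=> lm.
rewrite (@big_cat_nat _ _ _ l.+1) //=.
rewrite (eq_big_nat _ _ (F2 := fun _ => a)); last first.
  by move=> k /andP[_]; rewrite ltnS => ->.
rewrite (eq_big_nat _ _ (F1 := fun k => if (k <= l)%N then a else 0%R) (F2 := fun _ => 0%R)); last first.
  by move=> k /andP[ik _]; rewrite leqNgt ik.
by rewrite [X in (_ + X)%R]big1 // addr0 sumr_const_nat subn1.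
Qed.

Lemma ind_sum {R : realType} {T : Type} (lvl : T -> nat) m x : (lvl x < m)%N ->
  (\sum_(1 <= k < m) (\1_[set y | (k <= lvl y)%N] x : R) = (lvl x)%:R)%R.
Proof.
move=> lm; rewrite -(@sum_count R 1 _ _ lm); apply: eq_bigr => k _.
rewrite indicE; case: ifPn => h; first by rewrite mem_set.
by rewrite memNset // => /= h'; move: h; rewrite h'.
Qed.

Section TAUE.
Context {R : realType} {X : pmetricType R} (xi : nat -> set X -> R)
  (hxi : forall j, fa_outer_prob (xi j)).

Lemma tau_eventually (H : nat -> set X) (b : nat -> R) (s : seq nat) (e : R) :
  (0 < e)%R -> (forall k, tau_set xi (H k) <= (b k)%:E) ->
  exists N, forall n, (N <= n)%N ->
    (\sum_(k <- s) avg xi (H k) n <= \sum_(k <- s) b k + e)%R.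
Proof.
move=> e0 hb.
pose e' := (e / (size s).+1%:R)%R.
have e'0 : (0 < e')%R by rewrite divr_gt0 // ltr0n.
have gen : forall t : seq nat, exists N, forall n, (N <= n)%N ->
    (\sum_(k <- t) avg xi (H k) n <= \sum_(k <- t) (b k + e'))%R.
  elim=> [|k t [N hN]]; first by exists 0%N => n _; rewrite !big_nil.
  have : tau_set xi (H k) < (b k + e')%:E.
    by apply: le_lt_trans (hb k) _; rewrite lte_fin ltrDl.
  move=> /ls_lt [M hM]; exists (maxn N M) => n; rewrite geq_max => /andP[Nn Mn].
  rewrite !big_cons lerD //; last exact: hN.
  by have := hM n Mn; rewrite lte_fin => /ltW.
have [N hN] := gen s; exists N => n Nn; apply: le_trans (hN n Nn) _.
rewrite big_split /= lerD2l.
have -> : (\sum_(k <- s) e' = e' *+ size s)%R.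
  by elim: (s) => [|b' bs IH]; rewrite ?big_nil ?big_cons ?IH ?mulrS.
rewrite /e' -mulr_natr mulrAC ler_pdivrMr ?ltr0n //.
by rewrite ler_wpM2l ?ltW // ltr_nat.
Qed.

Lemma avg_affine (a dd : R) (H : nat -> set X) (s : seq nat) n : (0 < n)%N ->
  (n%:R^-1 * \sum_(j < n) (a + dd * \sum_(k <- s) xi j (H k)) =
   a + dd * \sum_(k <- s) avg xi (H k) n)%R.
Proof.
move=> n0; have nn : (n%:R != 0 :> R)%R by rewrite pnatr_eq0 -lt0n.
rewrite big_split /= sumr_const card_ord mulrDr -[(a *+ n)%R]mulr_natr mulrCA mulVf // mulr1.
congr (_ + _)%R; rewrite -mulr_sumr mulrCA; congr (_ * _)%R.
rewrite exchange_big /= mulr_sumr; apply: eq_bigr => k _; by [].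
Qed.
End TAUE.

Theorem mainTheorem16 (R : realType) (X : pmetricType R)
  (xi : nat -> set X -> R) :
  compact [set: X] ->
  (forall j, fa_outer_prob (xi j)) ->
  (* "eta is a probability measure": eta coincides on the Borel sets with a
     probability measure P on the Borel sigma-algebra of X *)
  forall P : probability (borel X) R,
    (forall A : set (borel X), measurable A -> P A = eta_borel xi A) ->
    forall phi : X -> R, continuous phi ->
      (\int[P]_x (phi x)%:E)%E = tau_fun xi phi.
Proof.
move=> cT hxi Pm hP phi cphi.
have mphi := phi_meas phi cphi.
have [M0 [rM0 hM0]] := compact_bounded (continuous_compact (continuous_subspaceT cphi) cT).
have bphi : [bounded phi x | x in [set: X]].
  by exists M0; split => // M hM x _; apply: (hM0 M hM); exists x.
have [M hM] : exists M : R, forall x, (`|phi x| <= M)%R.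
  exists (M0 + 1)%R => x; apply: (hM0 (M0 + 1)%R); last by exists x.
  by rewrite ltrDl.
have M0le : (0 <= M)%R by apply: le_trans (hM point).
have Pfin : Pm [set: borel X] < +oo.
  by rewrite -[X in X < _]/(Pm [set: borel X]) probability_setT ltry.
have iphi : Pm.-integrable [set: borel X] (EFin \o phi).
  exact: measurable_bounded_integrable measurableT Pfin mphi bphi.
have Pfine (A : set (borel X)) : measurable A -> Pm A = (fine (Pm A))%:E.
  move=> mA; rewrite fineK // ge0_fin_numE ?measure_ge0 //.
  by apply: le_lt_trans (probability_le1 Pm mA) _; rewrite ltry.
have isimple (c dd : R) (H : nat -> set X) (s : seq nat) :
    (forall k, measurable (H k : set (borel X))) ->
    Pm.-integrable [set: borel X]
      (fun x => c%:E + \sum_(k <- s) (dd * \1_(H k) x)%:E).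
  move=> mH; apply: (integrableD measurableT).
    exact: (finite_measure_integrable_cst _ c measurableT).
  apply: integrable_sum => // k _.
  under eq_fun do rewrite EFinM.
  exact: integrableZl (integrable_indic _ (mH k)).
have setup (dd : R) : (0 < dd)%R -> exists c (m : nat),
    (forall x, (c < phi x)%R) /\ (forall x, (phi x < c + m%:R * dd)%R).
  move=> hdd; exists (- M - 1)%R, (Num.bound ((2 * M + 2) / dd)).
  have h0 : (0 <= (2 * M + 2) / dd)%R by apply: divr_ge0; [lra|exact: ltW].
  have hb := archi_boundP h0.
  split => x; have := hM x; rewrite ler_norml => /andP[h1 h2].
    lra.
  have : (2 * M + 2 < (Num.bound ((2 * M + 2) / dd))%:R * dd)%R.
    by rewrite -ltr_pdivrMr.
  lra.
have UP (dd : R) : (0 < dd)%R -> tau_fun xi phi <= \int[Pm]_x (phi x)%:E + dd%:E.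
  move=> hdd; have [c [m [hc hm]]] := setup dd hdd.
  have [lvl [l1 l2 l3 l4]] := level_closed phi c dd m hdd hc hm.
  pose G k := [set x | (k <= lvl x)%N].
  have cG k : closed (G k).
    have -> : G k = phi @^-1` [set r | (c + k%:R * dd <= r)%R].
      by apply/seteqP; split => x /= /l4.
    apply: preimage_closed; last exact: closed_ge.
    by move=> x _; apply: cphi.
  have mG k : measurable (G k : set (borel X)) by apply: meas_closed.
  have tG k : tau_set xi (G k) <= (fine (Pm (G k)))%:E.
    rewrite -Pfine //; apply: le_trans (tau_closed_le_nu xi hxi (G k) cT (cG k)) _.
    by rewrite hP.
  have IG : (c + dd * \sum_(1 <= k < m) fine (Pm (G k)))%:E <= \int[Pm]_x (phi x)%:E.
    rewrite -int_simple //; apply: le_integral => //; first exact: isimple.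
    move=> x _; rewrite sumEFin -EFinD lee_fin -mulr_sumr ind_sum //.
    by rewrite mulrC.
  have TG : tau_fun xi phi <= (c + dd + dd * \sum_(1 <= k < m) fine (Pm (G k)))%:E.
    apply: ls_le => e he.
    have [N hN] := tau_eventually xi G (fun k => fine (Pm (G k))) (index_iota 1 m)
      (e / dd)%R (divr_gt0 he hdd) tG.
    exists (maxn N 1) => n; rewrite geq_max => /andP[Nn n1].
    apply: le_trans (_ : (n%:R^-1 * \sum_(j < n) (c + dd + dd * \sum_(1 <= k < m) xi j (G k)) <= _)%R).
      rewrite ler_wpM2l ?invr_ge0 ?ler0n //; apply: ler_sum => j _.
      by have /andP[_ ->] := fa_integral_bounds (xi j) (hxi j) phi c dd hdd m lvl l1 l2 l3.
    rewrite avg_affine // -!addrA !lerD2l -lerBlDl -mulrBr.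
    rewrite -ler_pdivlMl // mulrC lerBlDl; apply: le_trans (hN n Nn) _; by rewrite addrC.
  apply: le_trans TG _.
  have := IG; rewrite -(@leeD2rE _ dd%:E) // -EFinD.
  by apply: le_trans; rewrite lee_fin; lra.
have LO (dd : R) : (0 < dd)%R -> \int[Pm]_x (phi x)%:E <= tau_fun xi phi + dd%:E.
  move=> hdd; have [c [m [hc hm]]] := setup dd hdd.
  have [lvl [l1 l2 l3 l4]] := level_open phi c dd m hdd hc hm.
  pose U k := [set x | (k <= lvl x)%N].
  have cU k : closed (~` U k).
    have -> : ~` U k = phi @^-1` [set r | (r <= c + k%:R * dd)%R].
      apply/seteqP; split => x /=.
        by move=> h; rewrite leNgt; apply/negP => /l4.
      by rewrite leNgt => /negP h /l4.
    apply: preimage_closed; last exact: closed_le.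
    by move=> x _; apply: cphi.
  have mU k : measurable (U k : set (borel X)).
    by rewrite -(setCK (U k)); apply: measurableC; apply: meas_closed.
  have tU k : tau_set xi (~` U k) <= (fine (Pm (~` U k)))%:E.
    rewrite -Pfine //; last exact: meas_closed.
    apply: le_trans (tau_closed_le_nu xi hxi (~` U k) cT (cU k)) _.
    by rewrite hP //; apply: meas_closed.
  have PU k : fine (Pm (U k)) = (1 - fine (Pm (~` U k)))%R.
    have h := probability_setC Pm (mU k).
    have : fine (Pm (~` U k)) = (1 - fine (Pm (U k)))%R.
      by rewrite h (Pfine _ (mU k)) -EFinB.
    by move=> ->; rewrite opprB addrC subrK.
  have IU : \int[Pm]_x (phi x)%:E <= (c + dd + dd * \sum_(1 <= k < m) fine (Pm (U k)))%:E.
    rewrite -int_simple //; apply: le_integral => //; first exact: isimple.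
    move=> x _; rewrite sumEFin -EFinD lee_fin -mulr_sumr ind_sum //.
    by apply: le_trans (l3 x) _; rewrite -addn1 natrD; lra.
  have TU : (c + dd * \sum_(1 <= k < m) fine (Pm (U k)))%:E <= tau_fun xi phi.
    apply: ls_ge => e he.
    have [N hN] := tau_eventually xi (fun k => ~` U k) (fun k => fine (Pm (~` U k))) (index_iota 1 m)
      (e / dd)%R (divr_gt0 he hdd) tU.
    exists (maxn N 1) => n; rewrite geq_max => /andP[Nn n1].
    apply: le_trans (_ : (n%:R^-1 * \sum_(j < n) (c + dd * \sum_(1 <= k < m) xi j (U k)) <= _)%R); last first.
      rewrite ler_wpM2l ?invr_ge0 ?ler0n //; apply: ler_sum => j _.
      by have /andP[-> _] := fa_integral_bounds (xi j) (hxi j) phi c dd hdd m lvl l1 l2 l3.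
    rewrite avg_affine //.
    under eq_bigr do rewrite PU.
    have eA : (\sum_(1 <= k < m) avg xi (U k) n = \sum_(1 <= k < m) (1 - avg xi (~` U k) n))%R.
      by apply: eq_bigr => k _; rewrite -(avgC xi hxi _ _ n1) setCK.
    rewrite eA !sumrB !mulrBr.
    have h' : (dd * \sum_(1 <= k < m) avg xi (~` U k) n <=
               dd * \sum_(1 <= k < m) fine (Pm (~` U k)) + e)%R.
      have := hN n Nn; rewrite -(ler_pM2l hdd) mulrDr mulrCA divff ?mulr1 //.
      by rewrite gt_eqF.
    lra.
  apply: le_trans IU _.
  have := TU; rewrite -(@leeD2rE _ dd%:E) // -EFinD.
  by apply: le_trans; rewrite lee_fin; lra.
apply/eqP; rewrite eq_le; apply/andP; split; apply/lee_addgt0Pr => e he.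
  exact: LO.
exact: UP.
Qed.
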